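(* Let $k$ be a commutative ring, $H$ a cocommutative Hopf algebra over $k$ with antipode $S$, $A$ a cleft right $H$-comodule algebra with commutative $B=A^{\mathrm{co}H}$, regarded as a left $H$-module algebra via $h\cdot b=t(h_{(1)})bu(h_{(2)})$. Assume $\Omega_A\neq\emptyset$ and fix $t_0\in\Omega_A$; let $u_0=t_0\circ S$. Then $F:Z^1(H,B)\to\Omega_A$, $F(v)=v*t_0$, is a bijection with inverse $t\mapsto t*u_0$; $F$ maps cohomologous cocycles to equivalent elements of $\Omega_A$ and $F^{-1}$ maps equivalent elements to cohomologous cocycles. Hence $F$ induces a bijection $H^1(H,B)\to\overline{\Omega}_A$.
   Context: $\Delta(h)=h_{(1)}\otimes h_{(2)}$, $\rho(a)=a_{[0]}\otimes a_{[1]}$, $B=\{a:\rho(a)=a\otimes1\}$; convolution $(f*g)(h)=f(h_{(1)})g(h_{(2)})$. $A$ cleft: there is a convolution invertible $H$-colinear $t:H\to A$ ($\rho(t(h))=t(h_{(1)})\otimes h_{(2)}$) with inverse $u$; the module algebra structure on $B$ is independent of $t$. $\Omega_A$ is the set of $H$-colinear algebra maps $H\to A$; $t_1\sim t_2$ in $\Omega_A$ iff there is a unit $b\in U(B)$ with $bt_1(h)=t_2(h)b$ for all $h$; $\overline{\Omega}_A=\Omega_A/\sim$. $Z^1(H,B)$ is the group (under convolution) of convolution invertible $v:H\to B$ with $v(hk)=(h_{(1)}\cdot v(k))v(h_{(2)})$; $B^1(H,B)=\{f_b:b\in U(B)\}$ with $f_b(h)=(h\cdot b)b^{-1}$; $v\sim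 v_1$ (cohomologous) iff $v=f_b*v_1$ for some $b\in U(B)$; $H^1(H,B)=Z^1(H,B)/B^1(H,B)$. *)

(* Defs.v *)
(* Hopf algebras over a commutative ring k, encoded without
   a tensor-product library: an element of U (x) V is represented by a finite
   list of pairs (a formal sum of pure tensors), and two such lists are equal
   in U (x) V iff they agree on every k-bilinear map into every k-module
   (the universal property of the tensor product). *)
From HB Require Import structures.
From mathcomp Require Import all_boot all_order all_algebra.
Set Implicit Arguments. Unset Strict Implicit. Unset Printing Implicit Defensive.
Import Order.TTheory GRing.Theory.
Local Open Scope ring_scope.

Section Hopf.
Variable k : comPzRingType.

Definition klin (U M : lmodType k) (f : U -> M) :=
  forall (a : k) (x y : U), f (a *: x + y) = a *: f x + f y.

Definition kbilin (U V M : lmodType k) (f : U -> V -> M) :=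
  (forall v a x y, f (a *: x + y) v = a *: f x v + f y v) /\
  (forall u a x y, f u (a *: x + y) = a *: f u x + f u y).

Definition ktrilin (U V W M : lmodType k) (f : U -> V -> W -> M) :=
  (forall v w a x y, f (a *: x + y) v w = a *: f x v w + f y v w) /\
  (forall u w a x y, f u (a *: x + y) w = a *: f u x w + f u y w) /\
  (forall u v a x y, f u v (a *: x + y) = a *: f u v x + f u v y).

Definition tev (U V M : lmodType k) (x : seq (U * V)) (f : U -> V -> M) : M :=
  \sum_(p <- x) f p.1 p.2.

Variables (H A : algType k).

Definition is_hopf (delta : H -> seq (H * H)) (eps : H -> k) (S : H -> H) :=
  [/\
      (forall (M : lmodType k) (f : H -> H -> M), kbilin f ->
         klin (fun h => tev (delta h) f)),
      (forall a x y, eps (a *: x + y) = a * eps x + eps y),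
      (forall (M : lmodType k) (f : H -> H -> H -> M), ktrilin f -> forall h,
         \sum_(p <- delta h) \sum_(q <- delta p.1) f q.1 q.2 p.2 =
         \sum_(p <- delta h) \sum_(q <- delta p.2) f p.1 q.1 q.2),
      (forall h, (\sum_(p <- delta h) eps p.1 *: p.2 = h) /\
                 (\sum_(p <- delta h) eps p.2 *: p.1 = h)) &
      [/\
      (forall (M : lmodType k) (f : H -> H -> M), kbilin f ->
         (tev (delta 1) f = f 1 1) /\
         forall x y, tev (delta (x * y)) f =
           \sum_(p <- delta x) \sum_(q <- delta y) f (p.1 * q.1) (p.2 * q.2)),
      ((eps 1 = 1) /\ forall x y, eps (x * y) = eps x * eps y) &
      [/\ klin S,
          (forall h, \sum_(p <- delta h) S p.1 * p.2 = eps h *: 1) &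
          (forall h, \sum_(p <- delta h) p.1 * S p.2 = eps h *: 1)]]].

Definition cocommutative (delta : H -> seq (H * H)) :=
  forall (M : lmodType k) (f : H -> H -> M), kbilin f ->
    forall h, tev (delta h) f = tev (delta h) (fun x y => f y x).

Definition is_comod_alg (delta : H -> seq (H * H)) (eps : H -> k)
    (rho : A -> seq (A * H)) :=
  [/\ (forall (M : lmodType k) (f : A -> H -> M), kbilin f ->
         klin (fun a => tev (rho a) f)),
      (forall (M : lmodType k) (f : A -> H -> H -> M), ktrilin f -> forall a,
         \sum_(p <- rho a) \sum_(q <- rho p.1) f q.1 q.2 p.2 =
         \sum_(p <- rho a) \sum_(q <- delta p.2) f p.1 q.1 q.2),
      (forall a, \sum_(p <- rho a) eps p.2 *: p.1 = a) &
      (forall (M : lmodType k) (f : A -> H -> M), kbilin f ->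
         (tev (rho 1) f = f 1 1) /\
         forall x y, tev (rho (x * y)) f =
           \sum_(p <- rho x) \sum_(q <- rho y) f (p.1 * q.1) (p.2 * q.2))].

Definition coinv (rho : A -> seq (A * H)) (a : A) :=
  forall (M : lmodType k) (f : A -> H -> M), kbilin f -> tev (rho a) f = f a 1.

Definition unitB rho (b : A) :=
  coinv rho b /\ exists c, [/\ coinv rho c, b * c = 1 & c * b = 1].

Definition conv (delta : H -> seq (H * H)) (f g : H -> A) : H -> A :=
  fun h => \sum_(p <- delta h) f p.1 * g p.2.

Definition conv1 (eps : H -> k) : H -> A := fun h => eps h *: 1.

Definition colinear delta (rho : A -> seq (A * H)) (t : H -> A) :=
  klin t /\ forall h (M : lmodType k) (f : A -> H -> M), kbilin f ->
    tev (rho (t h)) f = \sum_(p <- delta h) f (t p.1) p.2.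

Definition cleaving delta eps rho (t u : H -> A) :=
  [/\ colinear delta rho t, klin u,
      conv delta t u =1 conv1 eps & conv delta u t =1 conv1 eps].

Definition act delta (t u : H -> A) (h : H) (b : A) : A :=
  \sum_(p <- delta h) t p.1 * b * u p.2.

Definition Omega delta rho (t : H -> A) :=
  [/\ colinear delta rho t, t 1 = 1 & forall x y, t (x * y) = t x * t y].

Definition equivOmega rho (t1 t2 : H -> A) :=
  exists b, unitB rho b /\ forall h, b * t1 h = t2 h * b.

Definition Z1 delta eps rho (t u : H -> A) (v : H -> A) :=
  [/\ klin v, (forall h, coinv rho (v h)),
      (exists w, [/\ klin w, (forall h, coinv rho (w h)),
                     conv delta v w =1 conv1 eps & conv delta w v =1 conv1 eps]) &
      forall h l, v (h * l) = \sum_(p <- delta h) act delta t u p.1 (v l) * v p.2].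

Definition cohomologous delta rho (t u : H -> A) (v v1 : H -> A) :=
  exists b c, [/\ coinv rho b, coinv rho c, b * c = 1, c * b = 1 &
    v =1 conv delta (fun h => act delta t u h b * c) v1].

End Hopf.

(* Main.v *)
Require Import Defs.
From mathcomp Require Import all_boot all_order all_algebra.
Set Implicit Arguments. Unset Strict Implicit. Unset Printing Implicit Defensive.
Import GRing.Theory.
Local Open Scope ring_scope.

Section Lin.
Variable k : comPzRingType.

Lemma klin0 (U M : lmodType k) (f : U -> M) : klin f -> f 0 = 0.
Proof.
move=> hf; have h := hf 1 0 0; rewrite !scale1r addr0 in h.
by apply: (@addrI _ (f 0)); rewrite addr0 -h.
Qed.

Lemma klinD (U M : lmodType k) (f : U -> M) : klin f -> forall x y, f (x + y) = f x + f y.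
Proof. by move=> hf x y; have := hf 1 x y; rewrite !scale1r. Qed.

Lemma klinZ (U M : lmodType k) (f : U -> M) : klin f -> forall a x, f (a *: x) = a *: f x.
Proof. by move=> hf a x; rewrite -[a *: x]addr0 hf klin0 // addr0. Qed.

Lemma klin_sum (U M : lmodType k) (f : U -> M) I (r : seq I) (F : I -> U) :
  klin f -> f (\sum_(i <- r) F i) = \sum_(i <- r) f (F i).
Proof.
move=> hf; elim: r => [|i r IH]; first by rewrite !big_nil klin0.
by rewrite !big_cons klinD // IH.
Qed.

Lemma mklin (U M : lmodType k) (f : U -> M) :
  (forall x y, f (x + y) = f x + f y) -> (forall a x, f (a *: x) = a *: f x) -> klin f.
Proof. by move=> hD hZ a x y; rewrite hD hZ. Qed.

Lemma lin_comp (U V M : lmodType k) (f : U -> V) (g : V -> M) :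
  klin f -> klin g -> klin (fun x => g (f x)).
Proof. by move=> hf hg a x y; rewrite hf hg. Qed.

Lemma lin_sum (U M : lmodType k) I (r : seq I) (F : I -> U -> M) :
  (forall i, klin (F i)) -> klin (fun x => \sum_(i <- r) F i x).
Proof.
move=> hF a x y; rewrite scaler_sumr -big_split /=.
by apply: eq_bigr => i _; rewrite hF.
Qed.

Lemma lin_mull (U : lmodType k) (B : algType k) (f : U -> B) (c : B) :
  klin f -> klin (fun x => c * f x).
Proof. by move=> hf a x y; rewrite hf mulrDr scalerAr. Qed.

Lemma lin_mulr (U : lmodType k) (B : algType k) (f : U -> B) (c : B) :
  klin f -> klin (fun x => f x * c).
Proof. by move=> hf a x y; rewrite hf mulrDl scalerAl. Qed.

Lemma lin_scale (U M : lmodType k) (f : U -> M) (c : k) :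
  klin f -> klin (fun x => c *: f x).
Proof. by move=> hf a x y; rewrite hf scalerDr !scalerA mulrC. Qed.

Lemma lin_id (U : lmodType k) : klin (fun x : U => x).
Proof. by []. Qed.

Lemma lin_cst0 (U M : lmodType k) : klin (fun _ : U => (0 : M)).
Proof. by move=> a x y; rewrite scaler0 addr0. Qed.

Lemma mkbilin (U V M : lmodType k) (f : U -> V -> M) :
  (forall v, klin (f^~ v)) -> (forall u, klin (f u)) -> kbilin f.
Proof. by move=> h1 h2; split=> [v|u]; [apply: h1|apply: h2]. Qed.

Lemma bilin1 (U V M : lmodType k) (f : U -> V -> M) v : kbilin f -> klin (f^~ v).
Proof. by case=> h1 _ a x y; apply: h1. Qed.
Lemma bilin2 (U V M : lmodType k) (f : U -> V -> M) u : kbilin f -> klin (f u).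
Proof. by case=> _ h2 a x y; apply: h2. Qed.

Lemma mktrilin (U V W M : lmodType k) (f : U -> V -> W -> M) :
  (forall v w, klin (fun x => f x v w)) -> (forall u w, klin (fun x => f u x w)) ->
  (forall u v, klin (f u v)) -> ktrilin f.
Proof. by move=> h1 h2 h3; split=> [v w|]; [|split=> [u w|u v]]; [apply: h1|apply: h2|apply: h3]. Qed.

End Lin.

Section Hopf.
Variable k : comPzRingType.
Variables (H A : algType k).
Variables (delta : H -> seq (H * H)) (eps : H -> k) (S : H -> H)
    (rho : A -> seq (A * H)).
Hypothesis hH : is_hopf delta eps S.
Hypothesis hcc : cocommutative delta.
Hypothesis hA : is_comod_alg delta eps rho.

Definition sw (M : lmodType k) (h : H) (g : H -> H -> M) : M :=
  \sum_(p <- delta h) g p.1 p.2.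

Lemma sw_lin (M : lmodType k) (g : H -> H -> M) : kbilin g -> klin (fun h => sw h g).
Proof. by case: hH => h1 _ _ _ _ hg; apply: h1. Qed.

Lemma lin_sw (U M : lmodType k) (phi : U -> H) (g : H -> H -> M) :
  klin phi -> kbilin g -> klin (fun x => sw (phi x) g).
Proof. by move=> hp hg; apply: lin_comp hp (sw_lin hg). Qed.

Lemma lin_swin (U M : lmodType k) (c : H) (G : U -> H -> H -> M) :
  (forall a b, klin (fun x => G x a b)) -> klin (fun x => sw c (G x)).
Proof. by move=> hG; apply: (@lin_sum _ _ _ _ _ (fun p x => G x p.1 p.2)) => p; apply: hG. Qed.

Lemma coassoc (M : lmodType k) (F : H -> H -> H -> M) h : ktrilin F ->
  sw h (fun x z => sw x (fun a b => F a b z)) = sw h (fun x y => sw y (fun a b => F x a b)).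
Proof. by case: hH => _ _ h3 _ _ hF; apply: h3. Qed.

Lemma epsD x y : eps (x + y) = eps x + eps y.
Proof. by case: hH => _ h _ _ _; have := h 1 x y; rewrite scale1r mul1r. Qed.

Lemma eps0 : eps 0 = 0.
Proof. by apply: (@addrI _ (eps 0)); rewrite -epsD !addr0. Qed.

Lemma epsZ a x : eps (a *: x) = a * eps x.
Proof. by case: hH => _ h _ _ _; have := h a x 0; rewrite addr0 eps0 addr0. Qed.

Lemma lin_eps (M : lmodType k) (c : M) : klin (fun x => eps x *: c).
Proof. by move=> a x y; rewrite epsD epsZ scalerDl scalerA. Qed.

Lemma counitL (M : lmodType k) (phi : H -> M) h : klin phi ->
  sw h (fun x y => eps y *: phi x) = phi h.
Proof.
case: hH => _ _ _ h4 _ hp; rewrite -{2}(proj2 (h4 h)) klin_sum // /sw.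
by apply: eq_bigr => p _; rewrite klinZ.
Qed.

Lemma counitR (M : lmodType k) (phi : H -> M) h : klin phi ->
  sw h (fun x y => eps x *: phi y) = phi h.
Proof.
case: hH => _ _ _ h4 _ hp; rewrite -{2}(proj1 (h4 h)) klin_sum // /sw.
by apply: eq_bigr => p _; rewrite klinZ.
Qed.

Lemma sw1 (M : lmodType k) (g : H -> H -> M) : kbilin g -> sw 1 g = g 1 1.
Proof. by case: hH => _ _ _ _ [h5 _ _] hg; case: (h5 _ _ hg). Qed.

Lemma swM (M : lmodType k) (g : H -> H -> M) x y : kbilin g ->
  sw (x * y) g = sw x (fun a b => sw y (fun c d => g (a * c) (b * d))).
Proof. by case: hH => _ _ _ _ [h5 _ _] hg; case: (h5 _ _ hg) => _ hh; exact: hh. Qed.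

Lemma eps1 : eps 1 = 1.
Proof. by case: hH => _ _ _ _ [_ [] ]. Qed.

Lemma epsM x y : eps (x * y) = eps x * eps y.
Proof. by case: hH => _ _ _ _ [_ [_ ->]]. Qed.

Lemma linS : klin S.
Proof. by case: hH => _ _ _ _ [_ _ []]. Qed.

Lemma antipL h : sw h (fun x y => S x * y) = eps h *: 1.
Proof. by case: hH => _ _ _ _ [_ _ [_ hh _]]; exact: hh. Qed.

Lemma antipR h : sw h (fun x y => x * S y) = eps h *: 1.
Proof. by case: hH => _ _ _ _ [_ _ [_ _ hh]]; exact: hh. Qed.

Lemma cocomm (M : lmodType k) (g : H -> H -> M) h : kbilin g ->
  sw h g = sw h (fun x y => g y x).
Proof. by move=> hg; apply: hcc. Qed.


Lemma lin_bil1 (U V W M : lmodType k) (g : V -> W -> M) (f : U -> V) w :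
  kbilin g -> klin f -> klin (fun x => g (f x) w).
Proof. by move=> hg hf; apply: lin_comp hf (bilin1 _ hg). Qed.

Lemma lin_bil2 (U V W M : lmodType k) (g : V -> W -> M) (f : U -> W) v :
  kbilin g -> klin f -> klin (fun x => g v (f x)).
Proof. by move=> hg hf; apply: lin_comp hf (bilin2 _ hg). Qed.

Lemma lin_S (U : lmodType k) (f : U -> H) : klin f -> klin (fun x => S (f x)).
Proof. by move=> hf; apply: lin_comp hf linS. Qed.

Lemma lin_eps' (U M : lmodType k) (f : U -> H) (c : M) : klin f -> klin (fun x => eps (f x) *: c).
Proof. by move=> hf; apply: (lin_comp hf (lin_eps c)). Qed.

Lemma tri1 (U V W M : lmodType k) (f : U -> V -> W -> M) v w :
  ktrilin f -> klin (fun x => f x v w).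
Proof. by case=> h1 _ a x y; apply: h1. Qed.
Lemma tri2 (U V W M : lmodType k) (f : U -> V -> W -> M) u w :
  ktrilin f -> klin (fun x => f u x w).
Proof. by case=> _ [h2 _] a x y; apply: h2. Qed.
Lemma tri3 (U V W M : lmodType k) (f : U -> V -> W -> M) u v :
  ktrilin f -> klin (fun x => f u v x).
Proof. by case=> _ [_ h3] a x y; apply: h3. Qed.

Lemma lin_tri1 (U V W X M : lmodType k) (g : V -> W -> X -> M) (f : U -> V) w z :
  ktrilin g -> klin f -> klin (fun x => g (f x) w z).
Proof. by move=> hg hf; apply: lin_comp hf (tri1 _ _ hg). Qed.
Lemma lin_tri2 (U V W X M : lmodType k) (g : V -> W -> X -> M) (f : U -> W) v z :
  ktrilin g -> klin f -> klin (fun x => g v (f x) z).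
Proof. by move=> hg hf; apply: lin_comp hf (tri2 _ _ hg). Qed.
Lemma lin_tri3 (U V W X M : lmodType k) (g : V -> W -> X -> M) (f : U -> X) v w :
  ktrilin g -> klin f -> klin (fun x => g v w (f x)).
Proof. by move=> hg hf; apply: lin_comp hf (tri3 _ _ hg). Qed.

Ltac lin :=
  cbv beta;
  first
  [ exact: lin_id
  | assumption
  | (apply: mkbilin => ?; lin)
  | (apply: mktrilin => ? ?; lin)
  | (apply: lin_swin => ? ?; lin)
  | (apply: lin_sw; lin)
  | (apply: lin_mulr; lin)
  | (apply: lin_mull; lin)
  | (apply: lin_scale; lin)
  | (apply: lin_eps'; lin)
  | (apply: lin_S; lin)
  | (apply: lin_bil1; lin)
  | (apply: lin_bil2; lin)
  | (apply: lin_tri1; lin)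
  | (apply: lin_tri2; lin)
  | (apply: lin_tri3; lin)
  ].

Lemma sw_ext (M : lmodType k) h (g g' : H -> H -> M) :
  (forall x y, g x y = g' x y) -> sw h g = sw h g'.
Proof. by move=> e; apply: eq_bigr => p _; apply: e. Qed.

Lemma sw_scale (M : lmodType k) h (g : H -> H -> M) c :
  c *: sw h g = sw h (fun x y => c *: g x y).
Proof. by rewrite /sw scaler_sumr. Qed.

Lemma sw_mull (B : algType k) h (g : H -> H -> B) c :
  c * sw h g = sw h (fun x y => c * g x y).
Proof. by rewrite /sw mulr_sumr. Qed.

Lemma sw_mulr (B : algType k) h (g : H -> H -> B) c :
  sw h g * c = sw h (fun x y => g x y * c).
Proof. by rewrite /sw mulr_suml. Qed.

Lemma sw_app (M N : lmodType k) h (g : H -> H -> M) (phi : M -> N) :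
  klin phi -> phi (sw h g) = sw h (fun x y => phi (g x y)).
Proof. by move=> hp; rewrite /sw klin_sum. Qed.

Lemma sw_exch (M : lmodType k) h l (G : H -> H -> H -> H -> M) :
  sw h (fun x y => sw l (fun a b => G x y a b)) = sw l (fun a b => sw h (fun x y => G x y a b)).
Proof. by rewrite /sw exchange_big. Qed.

Lemma sw_sw (M : lmodType k) h (G : H -> H -> H) (g : H -> H -> M) : kbilin g ->
  sw (sw h G) g = sw h (fun x y => sw (G x y) g).
Proof. by move=> hg; exact: (@klin_sum _ _ _ (fun h => sw h g) _ (delta h) (fun p => G p.1 p.2) (sw_lin hg)). Qed.

Lemma sw_add (M : lmodType k) h (g g' : H -> H -> M) :
  sw h g + sw h g' = sw h (fun x y => g x y + g' x y).
Proof. by rewrite /sw -big_split. Qed.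

Lemma test (M : lmodType k) (g : H -> H -> M) : kbilin g ->
  ktrilin (fun a b z => sw z (fun d1 d2 => g (a * S d2) (b * S d1))).
Proof. move=> hg. lin. Qed.

Lemma DR (M : lmodType k) (g : H -> H -> M) y : kbilin g ->
  sw y (fun c d => sw c (fun c1 c2 => sw d (fun d1 d2 => g (c1 * S d2) (c2 * S d1))))
  = eps y *: g 1 1.
Proof.
move=> hg.
rewrite coassoc; last by lin.
transitivity (sw y (fun c1 w => g (c1 * S w) 1)).
  apply: sw_ext => c1 w.
  rewrite -coassoc; last by lin.
  transitivity (sw w (fun e d2 => eps e *: g (c1 * S d2) 1)).
    apply: sw_ext => e d2.
    have := sw_app e (fun c2 d1 => c2 * S d1) (bilin2 (c1 * S d2) hg).
    rewrite /= => <-.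
    by rewrite antipR (klinZ (bilin2 _ hg)).
  by apply: (counitR (phi := fun d2 => g (c1 * S d2) 1)); lin.
have := sw_app y (fun c1 w => c1 * S w) (bilin1 1 hg).
rewrite /= => <-.
by rewrite antipR (klinZ (bilin1 _ hg)).
Qed.

Lemma DeltaS0 (M : lmodType k) (f : H -> H -> M) h : kbilin f ->
  sw (S h) f = sw h (fun x y => f (S y) (S x)).
Proof.
move=> hf.
pose K d p q := sw d (fun d1 d2 => f (p * S d2) (q * S d1)).
have hK d : kbilin (K d) by rewrite /K; lin.
transitivity (sw h (fun x y => sw y (fun c d => sw (S x * c) (K d)))).
  rewrite -{1}(counitL (phi := fun z => sw (S z) f) h); last by lin.
  apply: sw_ext => x y.
  rewrite sw_scale.
  transitivity (sw (S x) (fun a b => sw y (fun c d => sw c (fun c1 c2 =>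
                  K d (a * c1) (b * c2))))).
    apply: sw_ext => a b.
    have := DR y (g := fun p q => f (a * p) (b * q)).
    rewrite !mulr1 => <-; last by lin.
    apply: sw_ext => c d; apply: sw_ext => c1 c2; rewrite /K.
    by apply: sw_ext => d1 d2; rewrite !mulrA.
  rewrite sw_exch; apply: sw_ext => c d.
  by rewrite swM.
rewrite -coassoc; last by lin.
transitivity (sw h (fun z d => eps z *: K d 1 1)).
  apply: sw_ext => z d.
  rewrite -sw_sw // antipL.
  by rewrite (klinZ (sw_lin (hK d))) sw1.
rewrite (counitR (phi := fun d => K d 1 1)); last by rewrite /K; lin.
by rewrite /K; apply: sw_ext => d1 d2; rewrite !mul1r.
Qed.

Lemma DeltaS (M : lmodType k) (f : H -> H -> M) h : kbilin f ->
  sw (S h) f = sw h (fun x y => f (S x) (S y)).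
Proof.
move=> hf; rewrite DeltaS0 // (cocomm h (g := fun x y => f (S y) (S x))) //; lin.
Qed.

Definition rw (M : lmodType k) (a : A) (f : A -> H -> M) : M := \sum_(p <- rho a) f p.1 p.2.

Lemma rw_lin (M : lmodType k) (f : A -> H -> M) : kbilin f -> klin (fun a => rw a f).
Proof. by case: hA => h1 _ _ _ hf; apply: h1. Qed.

Lemma lin_rw (U M : lmodType k) (phi : U -> A) (g : A -> H -> M) :
  klin phi -> kbilin g -> klin (fun x => rw (phi x) g).
Proof. by move=> hp hg; apply: lin_comp hp (rw_lin hg). Qed.

Lemma lin_rwin (U M : lmodType k) (c : A) (G : U -> A -> H -> M) :
  (forall a b, klin (fun x => G x a b)) -> klin (fun x => rw c (G x)).
Proof. by move=> hG; apply: (@lin_sum _ _ _ _ _ (fun p x => G x p.1 p.2)) => p; apply: hG. Qed.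

Ltac lin ::=
  cbv beta;
  first
  [ exact: lin_id
  | assumption
  | (match goal with hh : forall _ _ _, klin _ |- _ => exact: hh end)
  | (apply: mkbilin => ?; lin)
  | (apply: mktrilin => ? ?; lin)
  | (apply: lin_swin => ? ?; lin)
  | (apply: lin_sw; lin)
  | (apply: lin_rwin => ? ?; lin)
  | (apply: lin_rw; lin)
  | (apply: lin_mulr; lin)
  | (apply: lin_mull; lin)
  | (apply: lin_scale; lin)
  | (apply: lin_eps'; lin)
  | (apply: lin_S; lin)
  | (apply: lin_bil1; lin)
  | (apply: lin_bil2; lin)
  | (apply: lin_tri1; lin)
  | (apply: lin_tri2; lin)
  | (apply: lin_tri3; lin)
  ].

Lemma rw_ext (M : lmodType k) a (g g' : A -> H -> M) :
  (forall x y, g x y = g' x y) -> rw a g = rw a g'.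
Proof. by move=> e; apply: eq_bigr => p _; apply: e. Qed.

Lemma rw_app (M N : lmodType k) a (g : A -> H -> M) (phi : M -> N) :
  klin phi -> phi (rw a g) = rw a (fun x y => phi (g x y)).
Proof. by move=> hp; rewrite /rw klin_sum. Qed.

Lemma rw1 (M : lmodType k) (f : A -> H -> M) : kbilin f -> rw 1 f = f 1 1.
Proof. by case: hA => _ _ _ h4 hf; case: (h4 _ _ hf). Qed.

Lemma rwM (M : lmodType k) (f : A -> H -> M) x y : kbilin f ->
  rw (x * y) f = rw x (fun a b => rw y (fun c d => f (a * c) (b * d))).
Proof. by case: hA => _ _ _ h4 hf; case: (h4 _ _ hf) => _ hh; exact: hh. Qed.

Lemma coinvE b (M : lmodType k) (f : A -> H -> M) : coinv rho b -> kbilin f -> rw b f = f b 1.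
Proof. by move=> hb hf; apply: hb. Qed.

Lemma rw_mulB (M : lmodType k) (f : A -> H -> M) x b : coinv rho b -> kbilin f ->
  rw (x * b) f = rw x (fun P1 P2 => f (P1 * b) P2).
Proof.
move=> hb hf; rewrite rwM //; apply: rw_ext => P1 P2.
by rewrite (coinvE hb) ?mulr1 //; lin.
Qed.

Lemma rw_Bmul (M : lmodType k) (f : A -> H -> M) x b : coinv rho b -> kbilin f ->
  rw (b * x) f = rw x (fun P1 P2 => f (b * P1) P2).
Proof.
move=> hb hf; rewrite rwM // (coinvE hb); last by lin.
by apply: rw_ext => P1 P2; rewrite mul1r.
Qed.

Lemma coinv1 : coinv rho 1.
Proof. by move=> M f hf; apply: rw1. Qed.

Lemma coinvM a b : coinv rho a -> coinv rho b -> coinv rho (a * b).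
Proof.
move=> ha hb M f hf; change (rw (a * b) f = f (a * b) 1).
by rewrite (rw_mulB a hb hf) (coinvE ha) //; lin.
Qed.

Lemma colinE (s : H -> A) h (M : lmodType k) (f : A -> H -> M) :
  colinear delta rho s -> kbilin f -> rw (s h) f = sw h (fun x y => f (s x) y).
Proof. by case=> _ hs hf; apply: hs. Qed.

Lemma colin_lin (s : H -> A) : colinear delta rho s -> klin s.
Proof. by case. Qed.

Lemma rho_sS (s : H -> A) h (M : lmodType k) (f : A -> H -> M) :
  colinear delta rho s -> kbilin f -> rw (s (S h)) f = sw h (fun x y => f (s (S x)) (S y)).
Proof.
move=> hs hf; rewrite (colinE _ hs hf) (DeltaS h (f := fun x y => f (s x) y)) //.
have hs' := colin_lin hs; lin.
Qed.

Section G4.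
Variable M : lmodType k.
Variable G : H -> H -> H -> H -> M.
Hypothesis hG1 : forall b c d, klin (fun x => G x b c d).
Hypothesis hG2 : forall a c d, klin (fun x => G a x c d).
Hypothesis hG3 : forall a b d, klin (fun x => G a b x d).
Hypothesis hG4 : forall a b c, klin (fun x => G a b c x).

Lemma REG4 h :
  sw h (fun x y => sw x (fun x1 x2 => sw y (fun y1 y2 => G x1 x2 y1 y2))) =
  sw h (fun x1 r => sw r (fun m y2 => sw m (fun x2 y1 => G x1 x2 y1 y2))).
Proof.
rewrite coassoc; last by lin.
apply: sw_ext => x1 r.
by rewrite -coassoc; last by lin.
Qed.

Lemma SWAP4 h :
  sw h (fun x y => sw x (fun x1 x2 => sw y (fun y1 y2 => G x1 x2 y1 y2))) =
  sw h (fun x1 r => sw r (fun y1 n => sw n (fun x2 y2 => G x1 x2 y1 y2))).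
Proof.
rewrite REG4; apply: sw_ext => x1 r.
transitivity (sw r (fun m y2 => sw m (fun y1 x2 => G x1 x2 y1 y2))).
  apply: sw_ext => m y2.
  by rewrite (cocomm m (g := fun x2 y1 => G x1 x2 y1 y2)) //; lin.
by rewrite coassoc; last by lin.
Qed.
End G4.

Lemma conv_lin (f g : H -> A) : klin f -> klin g -> klin (conv delta f g).
Proof. move=> hf hg; change (klin (fun h => sw h (fun x y => f x * g y))); lin. Qed.

Lemma conv_ext (f f' g g' : H -> A) : f =1 f' -> g =1 g' -> conv delta f g =1 conv delta f' g'.
Proof. by move=> e1 e2 h; rewrite /conv; apply: eq_bigr => p _; rewrite e1 e2. Qed.

Lemma conv_assoc (f g l : H -> A) : klin f -> klin g -> klin l ->
  conv delta (conv delta f g) l =1 conv delta f (conv delta g l).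
Proof.
move=> hf hg hl h.
change (sw h (fun x z => sw x (fun a b => f a * g b) * l z) =
        sw h (fun x y => f x * sw y (fun a b => g a * l b))).
transitivity (sw h (fun x z => sw x (fun a b => f a * g b * l z))).
  by apply: sw_ext => x z; rewrite sw_mulr.
rewrite coassoc; last by lin.
by apply: sw_ext => x y; rewrite sw_mull; apply: sw_ext => a b; rewrite mulrA.
Qed.

Lemma conv1r (f : H -> A) : klin f -> conv delta f (conv1 A eps) =1 f.
Proof.
move=> hf h; rewrite -[RHS](counitL (phi := f) h) //.
by rewrite /conv /sw; apply: eq_bigr => p _; rewrite /conv1 -scalerAr mulr1.
Qed.

Lemma conv1l (f : H -> A) : klin f -> conv delta (conv1 A eps) f =1 f.
Proof.
move=> hf h; rewrite -[RHS](counitR (phi := f) h) //.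
by rewrite /conv /sw; apply: eq_bigr => p _; rewrite /conv1 -scalerAl mul1r.
Qed.

Section Om.
Variable s : H -> A.
Hypothesis hs : Omega delta rho s.
Lemma om_colin : colinear delta rho s. Proof. by case: hs. Qed.
Lemma om_lin : klin s. Proof. by case: hs => [[]]. Qed.
Lemma om1 : s 1 = 1. Proof. by case: hs. Qed.
Lemma omM x y : s (x * y) = s x * s y. Proof. by case: hs. Qed.
Lemma omS_lin : klin (fun h => s (S h)).
Proof. by apply: lin_comp linS om_lin. Qed.

Lemma om_invR : conv delta s (fun h => s (S h)) =1 conv1 A eps.
Proof.
move=> h; change (sw h (fun x y => s x * s (S y)) = eps h *: 1).
transitivity (s (sw h (fun x y => x * S y))).
  by rewrite (sw_app _ _ om_lin); apply: sw_ext => x y; rewrite omM.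
by rewrite antipR (klinZ om_lin) om1.
Qed.

Lemma om_invL : conv delta (fun h => s (S h)) s =1 conv1 A eps.
Proof.
move=> h; change (sw h (fun x y => s (S x) * s y) = eps h *: 1).
transitivity (s (sw h (fun x y => S x * y))).
  by rewrite (sw_app _ _ om_lin); apply: sw_ext => x y; rewrite omM.
by rewrite antipL (klinZ om_lin) om1.
Qed.
End Om.

Lemma GB (a s : H -> A) b h : colinear delta rho a -> Omega delta rho s -> coinv rho b ->
  coinv rho (sw h (fun x y => a x * b * s (S y))).
Proof.
move=> ha hs hb M f hf.
have ha' := colin_lin ha; have hs' := om_lin hs; have hsS := omS_lin hs.
change (rw (sw h (fun x y => a x * b * s (S y))) f = f (sw h (fun x y => a x * b * s (S y))) 1).
have e := sw_app h (fun x y => a x * b * s (S y)) (rw_lin hf); cbv beta in e; rewrite e {e}.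
transitivity (sw h (fun x y => sw x (fun x1 x2 => sw y (fun y1 y2 =>
                f (a x1 * b * s (S y1)) (x2 * S y2))))).
  apply: sw_ext => x y.
  rewrite rwM // rw_mulB //; last by lin.
  rewrite (colinE _ ha); last by lin.
  apply: sw_ext => x1 x2.
  by rewrite (rho_sS _ (om_colin hs)); last by lin.
rewrite SWAP4; try by move=> *; lin.
have e := sw_app h (fun x y => a x * b * s (S y)) (bilin1 1 hf); cbv beta in e; rewrite e {e}.
apply: sw_ext => x1 r.
transitivity (sw r (fun y1 n => eps n *: f (a x1 * b * s (S y1)) 1)).
  apply: sw_ext => y1 n.
  have e := sw_app n (fun x2 y2 => x2 * S y2) (bilin2 (a x1 * b * s (S y1)) hf).
  cbv beta in e; rewrite -e {e}.
  by rewrite antipR (klinZ (bilin2 _ hf)).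
by rewrite (counitL (phi := fun y1 => f (a x1 * b * s (S y1)) 1)); last by lin.
Qed.

Variables (t u t0 : H -> A).
Hypothesis hcl : cleaving delta eps rho t u.
Hypothesis hBc : forall a b, coinv rho a -> coinv rho b -> a * b = b * a.
Hypothesis ht0 : Omega delta rho t0.

Lemma t_colin : colinear delta rho t. Proof. by case: hcl. Qed.
Lemma t_lin : klin t. Proof. exact: colin_lin t_colin. Qed.
Lemma u_lin : klin u. Proof. by case: hcl. Qed.
Lemma tu_inv : conv delta t u =1 conv1 A eps. Proof. by case: hcl. Qed.

Lemma convE (f g : H -> A) h : conv delta f g h = sw h (fun x y => f x * g y).
Proof. by []. Qed.

Lemma GB1 (a s : H -> A) h : colinear delta rho a -> Omega delta rho s ->
  coinv rho (conv delta a (fun y => s (S y)) h).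
Proof.
move=> ha hs; have := GB h ha hs coinv1.
by rewrite /conv /sw; under eq_bigr do rewrite mulr1.
Qed.

Lemma act_indep s b h : Omega delta rho s -> coinv rho b ->
  act delta t u h b = sw h (fun x y => s x * b * s (S y)).
Proof.
move=> hs hb.
have ht := t_lin; have hu := u_lin; have hs' := om_lin hs; have hsS := omS_lin hs.
pose w := conv delta t (fun y => s (S y)).
pose w' := conv delta s u.
pose beta m := sw m (fun x2 y1 => s x2 * b * s (S y1)).
have hw : klin w by apply: conv_lin.
have hw' : klin w' by apply: conv_lin.
have hbeta : klin beta by rewrite /beta; lin.
have et : t =1 conv delta w s.
  move=> h0; rewrite conv_assoc // (conv_ext (f' := t) _ (om_invL hs)) //.
  by rewrite conv1r.
have eu : u =1 conv delta (fun y => s (S y)) w'.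
  move=> h0; rewrite -conv_assoc // (conv_ext (om_invL hs) (g' := u)) //.
  by rewrite conv1l.
have ww' : conv delta w w' =1 conv1 A eps.
  move=> h0; rewrite (conv_assoc ht hsS hw').
  by rewrite -(conv_ext (fun z => erefl (t z)) eu h0) tu_inv.
have cw x : coinv rho (w x) by apply: GB1 => //; apply: t_colin.
have cb m : coinv rho (beta m) by exact: GB m (om_colin hs) hs hb.
change (sw h (fun x y => t x * b * u y) = beta h).
transitivity (sw h (fun x y => sw x (fun x1 x2 => sw y (fun y1 y2 =>
                w x1 * s x2 * b * (s (S y1) * w' y2))))).
  apply: sw_ext => x y; rewrite et eu.
  rewrite !convE.
  rewrite !sw_mulr; apply: sw_ext => x1 x2; by rewrite sw_mull.
rewrite REG4; try by move=> *; lin.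
transitivity (sw h (fun x1 r => sw r (fun m y2 => beta m * w x1 * w' y2))).
  apply: sw_ext => x1 r; apply: sw_ext => m y2.
  rewrite -(hBc (cw x1) (cb m)) /beta sw_mull sw_mulr.
  by apply: sw_ext => x2 y1; rewrite !mulrA.
rewrite -coassoc; last by lin.
transitivity (sw h (fun z y2 => sw z (fun x1 m => beta x1 * w m * w' y2))).
  apply: sw_ext => z y2.
  by rewrite (cocomm z (g := fun x1 m => beta m * w x1 * w' y2)) //; lin.
rewrite coassoc; last by lin.
transitivity (sw h (fun x1 r => eps r *: beta x1)).
  apply: sw_ext => x1 r.
  transitivity (beta x1 * conv delta w w' r).
    by rewrite convE sw_mull; apply: sw_ext => m y2; rewrite mulrA.
  by rewrite ww' /conv1 -scalerAr mulr1.
by rewrite counitL.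
Qed.

Lemma actE h b : act delta t u h b = sw h (fun x y => t x * b * u y).
Proof. by []. Qed.

Lemma act_coinv h b : coinv rho b -> coinv rho (act delta t u h b).
Proof.
move=> hb; rewrite (act_indep h ht0 hb).
exact: GB h (om_colin ht0) ht0 hb.
Qed.

Lemma act_lin b : klin (fun h => act delta t u h b).
Proof. have ht := t_lin; have hu := u_lin; rewrite /act; change (klin (fun h => sw h (fun x y => t x * b * u y))); lin. Qed.

Lemma act_s s r B : Omega delta rho s -> coinv rho B ->
  sw r (fun q a2 => act delta t u q B * s a2) = s r * B.
Proof.
move=> hs hB.
have hs' := om_lin hs; have hsS := omS_lin hs.
transitivity (sw r (fun q a2 => sw q (fun c d => s c * B * s (S d) * s a2))).
  by apply: sw_ext => q a2; rewrite (act_indep q hs hB) sw_mulr.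
rewrite coassoc; last by lin.
transitivity (sw r (fun c m => eps m *: (s c * B))).
  apply: sw_ext => c m.
  transitivity (s c * B * conv delta (fun y => s (S y)) s m).
    by rewrite convE sw_mull; apply: sw_ext => d a2; rewrite !mulrA.
  by rewrite om_invL // /conv1 -scalerAr mulr1.
by rewrite (counitL (phi := fun c => s c * B)); last by lin.
Qed.

Lemma S1 : S 1 = 1.
Proof.
have := antipL 1; rewrite sw1; last by lin.
by rewrite mulr1 eps1 scale1r.
Qed.

Lemma S_antimul x y : S (x * y) = S y * S x.
Proof.
symmetry.
transitivity (sw x (fun X x3 => sw y (fun Y y3 => eps X *: (eps Y *: (S y3 * S x3))))).
  rewrite -[in LHS](counitR (phi := fun x3 => S y * S x3) x); last by lin.
  apply: sw_ext => X x3.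
  rewrite -(counitR (phi := fun y3 => S y3 * S x3) y); last by lin.
  by rewrite sw_scale.
transitivity (sw x (fun X x3 => sw y (fun Y y3 => sw X (fun x1 x2 => sw Y (fun y1 y2 =>
                S (x1 * y1) * (x2 * y2) * (S y3 * S x3)))))).
  apply: sw_ext => X x3; apply: sw_ext => Y y3.
  rewrite scalerA -epsM -[in LHS](mul1r (S y3 * S x3)) scalerAl -antipL.
  rewrite swM; last by lin.
  rewrite sw_mulr; apply: sw_ext => x1 x2; by rewrite sw_mulr.
transitivity (sw x (fun X x3 => sw X (fun x1 x2 => sw y (fun Y y3 => sw Y (fun y1 y2 =>
                S (x1 * y1) * (x2 * y2) * (S y3 * S x3)))))).
  by apply: sw_ext => X x3; rewrite sw_exch.
rewrite coassoc; last by lin.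
transitivity (sw x (fun x1 Z => sw Z (fun x2 x3 => sw y (fun y1 W => sw W (fun y2 y3 =>
                S (x1 * y1) * (x2 * y2) * (S y3 * S x3)))))).
  apply: sw_ext => x1 Z; apply: sw_ext => x2 x3.
  by rewrite coassoc; last by lin.
transitivity (sw x (fun x1 Z => sw y (fun y1 W => eps Z *: (eps W *: S (x1 * y1))))).
  apply: sw_ext => x1 Z.
  transitivity (sw Z (fun x2 x3 => sw y (fun y1 W => eps W *: (S (x1 * y1) * (x2 * S x3))))).
    apply: sw_ext => x2 x3; apply: sw_ext => y1 W.
    transitivity (S (x1 * y1) * (x2 * sw W (fun y2 y3 => y2 * S y3)) * S x3).
      rewrite sw_mull sw_mull sw_mulr; apply: sw_ext => y2 y3.
      by rewrite !mulrA.
    by rewrite antipR -scalerAr mulr1 -scalerAr -scalerAl !mulrA.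
  rewrite sw_exch; apply: sw_ext => y1 W.
  rewrite -sw_scale -sw_mull antipR.
  by rewrite -scalerAr mulr1 scalerA mulrC -scalerA.
rewrite -[RHS](counitL (phi := fun x1 => S (x1 * y)) x); last by lin.
apply: sw_ext => x1 Z.
rewrite -(counitL (phi := fun y1 => S (x1 * y1)) y); last by lin.
by rewrite sw_scale.
Qed.

Ltac lin ::=
  cbv beta;
  first
  [ exact: lin_id
  | assumption
  | (match goal with hh : forall _, klin _ |- _ => exact: hh end)
  | (match goal with hh : forall _ _, klin _ |- _ => exact: hh end)
  | (match goal with hh : forall _ _ _, klin _ |- _ => exact: hh end)
  | (apply: mkbilin => ?; lin)
  | (apply: mktrilin => ? ?; lin)
  | (apply: lin_swin => ? ?; lin)
  | (apply: lin_sw; lin)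
  | (apply: lin_rwin => ? ?; lin)
  | (apply: lin_rw; lin)
  | (apply: lin_mulr; lin)
  | (apply: lin_mull; lin)
  | (apply: lin_scale; lin)
  | (apply: lin_eps'; lin)
  | (apply: lin_S; lin)
  | (apply: lin_bil1; lin)
  | (apply: lin_bil2; lin)
  | (apply: lin_tri1; lin)
  | (apply: lin_tri2; lin)
  | (apply: lin_tri3; lin)
  ].

Lemma conv_extr (f g g' : H -> A) h : g =1 g' -> conv delta f g h = conv delta f g' h.
Proof. by move=> e; apply: conv_ext. Qed.
Lemma conv_extl (f f' g : H -> A) h : f =1 f' -> conv delta f g h = conv delta f' g h.
Proof. by move=> e; apply: conv_ext. Qed.

Section Z1.
Variable v : H -> A.
Hypothesis hz : Z1 delta eps rho t u v.
Lemma z_lin : klin v. Proof. by case: hz. Qed.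
Lemma z_coinv h : coinv rho (v h). Proof. by case: hz. Qed.
Lemma z_coc h l : v (h * l) = sw h (fun x y => act delta t u x (v l) * v y).
Proof. by case: hz => _ _ _; apply. Qed.

Lemma z_one : v 1 = 1.
Proof.
have hact := act_lin; have hv := z_lin; have ht0' := om_lin ht0; have ht0S := omS_lin ht0.
case: hz => _ _ [w [hw _ hvw _]] _.
have e := z_coc 1 1; rewrite mulr1 sw1 in e; last by lin.
rewrite (act_indep 1 ht0 (z_coinv 1)) sw1 in e; last by lin.
rewrite S1 (om1 ht0) mul1r mulr1 in e.
have i1 : v 1 * w 1 = 1.
  have e1 := hvw 1; rewrite convE sw1 in e1; last by lin.
  by rewrite e1 /conv1 eps1 scale1r.
by rewrite -i1 {2}e -mulrA i1 mulr1.
Qed.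

Lemma key1 B x : coinv rho B ->
  sw x (fun a1 a2 => sw a1 (fun p q => act delta t u p B * v q) * t0 a2) = conv delta v t0 x * B.
Proof.
move=> hB.
have hact := act_lin; have hv := z_lin; have ht0' := om_lin ht0; have ht0S := omS_lin ht0.
transitivity (sw x (fun a1 a2 => sw a1 (fun p q => act delta t u p B * v q * t0 a2))).
  by apply: sw_ext => a1 a2; rewrite sw_mulr.
rewrite coassoc; last by lin.
transitivity (sw x (fun p r => sw r (fun q a2 => v q * act delta t u p B * t0 a2))).
  apply: sw_ext => p r; apply: sw_ext => q a2.
  by rewrite (hBc (act_coinv p hB) (z_coinv q)).
rewrite -coassoc; last by lin.
transitivity (sw x (fun z a2 => sw z (fun p q => v p * act delta t u q B * t0 a2))).
  apply: sw_ext => z a2.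
  by rewrite (cocomm z (g := fun p q => v q * act delta t u p B * t0 a2)) //; lin.
rewrite coassoc; last by lin.
transitivity (sw x (fun p r => v p * (t0 r * B))).
  apply: sw_ext => p r; rewrite -(act_s r ht0 hB) sw_mull.
  by apply: sw_ext => q a2; rewrite !mulrA.
by rewrite convE sw_mulr; apply: sw_ext => p r; rewrite mulrA.
Qed.

Lemma FOmega : Omega delta rho (conv delta v t0).
Proof.
have hact := act_lin; have hv := z_lin; have ht0' := om_lin ht0; have ht0S := omS_lin ht0.
split.
- split; first exact: conv_lin.
  move=> h M f hf.
  change (rw (conv delta v t0 h) f = sw h (fun x y => f (conv delta v t0 x) y)).
  rewrite convE; have e := sw_app h (fun x y => v x * t0 y) (rw_lin hf); cbv beta in e; rewrite e {e}.
  transitivity (sw h (fun x y => sw y (fun y1 y2 => f (v x * t0 y1) y2))).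
    apply: sw_ext => x y; rewrite rw_Bmul; [|exact: z_coinv|lin].
    by rewrite (colinE _ (om_colin ht0)); last by lin.
  rewrite -coassoc; last by lin.
  apply: sw_ext => z y2.
  rewrite convE; have e := sw_app z (fun x y1 => v x * t0 y1) (bilin1 y2 hf); cbv beta in e.
  by rewrite e.
- by rewrite convE sw1 ?z_one ?(om1 ht0) ?mulr1 //; lin.
- move=> x y.
  rewrite convE swM; last by lin.
  transitivity (sw x (fun a1 a2 => sw y (fun b1 b2 =>
      sw a1 (fun p q => act delta t u p (v b1) * v q) * t0 a2 * t0 b2))).
    apply: sw_ext => a1 a2; apply: sw_ext => b1 b2.
    by rewrite (omM ht0) mulrA z_coc.
  rewrite sw_exch.
  transitivity (sw y (fun b1 b2 => conv delta v t0 x * v b1 * t0 b2)).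
    apply: sw_ext => b1 b2.
    by rewrite -(key1 x (z_coinv b1)) sw_mulr.
  by rewrite [conv delta v t0 y]convE sw_mull; apply: sw_ext => b1 b2; rewrite mulrA.
Qed.
End Z1.

Section Finv.
Variable s : H -> A.
Hypothesis hs : Omega delta rho s.
Let u0 := fun h => t0 (S h).
Let sS := fun h => s (S h).

Lemma FinvZ1 : Z1 delta eps rho t u (conv delta s u0).
Proof.
have hs' := om_lin hs; have hsS : klin sS := omS_lin hs.
have ht0' := om_lin ht0; have hu0 : klin u0 := omS_lin ht0.
have hact := act_lin.
have hV : klin (conv delta s u0) by apply: conv_lin.
have hW : klin (conv delta t0 sS) by apply: conv_lin.
have cV h : coinv rho (conv delta s u0 h) by apply: GB1 (om_colin hs) ht0.
split.
- exact: hV.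
- exact: cV.
- exists (conv delta t0 sS); split => //.
  + by move=> h; apply: GB1 (om_colin ht0) hs.
  + move=> h; rewrite conv_assoc //.
    rewrite (conv_extr _ _ (fun z => esym (conv_assoc hu0 ht0' hsS z))).
    rewrite (conv_extr _ _ (fun z => conv_extl _ z (om_invL ht0))).
    rewrite (conv_extr _ _ (conv1l hsS)).
    exact: (om_invR hs h).
  + move=> h; rewrite conv_assoc //.
    rewrite (conv_extr _ _ (fun z => esym (conv_assoc hsS hs' hu0 z))).
    rewrite (conv_extr _ _ (fun z => conv_extl _ z (om_invL hs))).
    rewrite (conv_extr _ _ (conv1l hu0)).
    exact: (om_invR ht0 h).
- move=> h l.
  change (conv delta s u0 (h * l) =
          sw h (fun x y => act delta t u x (conv delta s u0 l) * conv delta s u0 y)).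
  set V := conv delta s u0.
  transitivity (sw h (fun x1 r => s x1 * V l * u0 r)).
    rewrite /V convE swM; last by lin.
    apply: sw_ext => x1 x2.
    rewrite convE sw_mull sw_mulr; apply: sw_ext => y1 y2.
    by rewrite /u0 (omM hs) S_antimul (omM ht0) !mulrA.
  symmetry.
  transitivity (sw h (fun x y => V x * act delta t u y (V l))).
    rewrite [RHS](cocomm h (g := fun x y => V x * act delta t u y (V l))); last by lin.
    apply: sw_ext => x y.
    by rewrite (hBc (act_coinv x (cV l)) (cV y)).
  transitivity (sw h (fun x y => sw x (fun x1 x2 => sw y (fun y1 y2 =>
                  s x1 * u0 x2 * (t0 y1 * V l * u0 y2))))).
    apply: sw_ext => x y.
    rewrite (act_indep y ht0 (cV l)) /V convE sw_mulr.
    by apply: sw_ext => x1 x2; rewrite sw_mull.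
  rewrite REG4; try by move=> *; lin.
  apply: sw_ext => x1 r.
  transitivity (sw r (fun m y2 => eps m *: (s x1 * V l * u0 y2))).
    apply: sw_ext => m y2.
    transitivity (s x1 * conv delta u0 t0 m * V l * u0 y2).
      rewrite convE sw_mull !sw_mulr; apply: sw_ext => x2 y1.
      by rewrite !mulrA.
    by rewrite (om_invL ht0) /conv1 -scalerAr mulr1 -!scalerAl.
  by rewrite (counitR (phi := fun y2 => s x1 * V l * u0 y2)); last by lin.
Qed.

Lemma FFinv : conv delta (conv delta s u0) t0 =1 s.
Proof.
move=> h; rewrite conv_assoc; [|exact: om_lin hs|exact: omS_lin ht0|exact: om_lin ht0].
by rewrite (conv_extr _ _ (om_invL ht0)) conv1r //; exact: om_lin hs.
Qed.
End Finv.

Lemma FinvF v : Z1 delta eps rho t u v -> conv delta (conv delta v t0) (fun h => t0 (S h)) =1 v.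
Proof.
move=> hz h; rewrite conv_assoc; [|exact: z_lin hz|exact: om_lin ht0|exact: omS_lin ht0].
by rewrite (conv_extr _ _ (om_invR ht0)) conv1r //; exact: z_lin hz.
Qed.

Lemma convfb s b c x : Omega delta rho s -> coinv rho b -> coinv rho c ->
  conv delta (fun h => act delta t u h b * c) s x = c * (s x * b).
Proof.
move=> hs hb hc.
rewrite -(act_s x hs hb) convE sw_mull; apply: sw_ext => p q.
by rewrite (hBc (act_coinv p hb) hc) mulrA.
Qed.

Lemma fb_lin b c : klin (fun h => act delta t u h b * c).
Proof. have hact := act_lin; lin. Qed.

Lemma cohom_equiv v v1 : Z1 delta eps rho t u v -> Z1 delta eps rho t u v1 ->
  cohomologous delta rho t u v v1 -> equivOmega rho (conv delta v t0) (conv delta v1 t0).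
Proof.
move=> hz hz1 [b [c [hb hc bc cb ev]]].
exists b; split; first by split => //; exists c.
move=> h.
have hs1 := FOmega hz1.
rewrite (conv_extl _ _ ev) conv_assoc; [|exact: fb_lin|exact: z_lin hz1|exact: om_lin ht0].
by rewrite (convfb _ hs1 hb hc) mulrA bc mul1r.
Qed.

Lemma equiv_cohom s1 s2 : Omega delta rho s1 -> Omega delta rho s2 -> equivOmega rho s1 s2 ->
  cohomologous delta rho t u (conv delta s1 (fun h => t0 (S h))) (conv delta s2 (fun h => t0 (S h))).
Proof.
move=> h1 h2 [b [[hb [c [hc bc cb]]] e]].
exists b, c; split => // h.
rewrite -conv_assoc; [|exact: fb_lin|exact: om_lin h2|exact: omS_lin ht0].
apply: conv_extl => x.
by rewrite (convfb _ h2 hb hc) -e mulrA cb mul1r.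
Qed.

Lemma main :
  let F := fun v => conv delta v t0 in
  let Finv := fun s => conv delta s (fun h => t0 (S h)) in
  [/\ (forall v, Z1 delta eps rho t u v -> Omega delta rho (F v)),
      (forall s, Omega delta rho s -> Z1 delta eps rho t u (Finv s)),
      (forall v, Z1 delta eps rho t u v -> Finv (F v) =1 v),
      (forall s, Omega delta rho s -> F (Finv s) =1 s) &
    [/\
      (forall v v1, Z1 delta eps rho t u v -> Z1 delta eps rho t u v1 ->
         cohomologous delta rho t u v v1 -> equivOmega rho (F v) (F v1)),
      (forall s1 s2, Omega delta rho s1 -> Omega delta rho s2 ->
         equivOmega rho s1 s2 -> cohomologous delta rho t u (Finv s1) (Finv s2)) &
      (forall v v1, Z1 delta eps rho t u v -> Z1 delta eps rho t u v1 ->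
         (cohomologous delta rho t u v v1 <-> equivOmega rho (F v) (F v1)))]].
Proof.
move=> F Finv; split.
- exact: FOmega.
- exact: FinvZ1.
- exact: FinvF.
- exact: FFinv.
split.
- exact: cohom_equiv.
- exact: equiv_cohom.
move=> v v1 hz hz1; split; first exact: cohom_equiv.
move=> he.
have [b [c [hb hc bc cb ev]]] := equiv_cohom (FOmega hz) (FOmega hz1) he.
exists b, c; split => // h.
rewrite -(FinvF hz h) ev.
by apply: conv_extr => x; apply: FinvF.
Qed.
End Hopf.

Unset Implicit Arguments.

Theorem proposition5p7 (k : comPzRingType) (H A : algType k)
    (delta : H -> seq (H * H)) (eps : H -> k) (S : H -> H)
    (rho : A -> seq (A * H)) (t u t0 : H -> A) :
  is_hopf delta eps S -> cocommutative delta ->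
  is_comod_alg delta eps rho -> cleaving delta eps rho t u ->
  (forall a b, coinv rho a -> coinv rho b -> a * b = b * a) ->
  Omega delta rho t0 ->
  let F := fun v => conv delta v t0 in
  let Finv := fun s => conv delta s (fun h => t0 (S h)) in
  [/\ (forall v, Z1 delta eps rho t u v -> Omega delta rho (F v)),
      (forall s, Omega delta rho s -> Z1 delta eps rho t u (Finv s)),
      (forall v, Z1 delta eps rho t u v -> Finv (F v) =1 v),
      (forall s, Omega delta rho s -> F (Finv s) =1 s) &
    [/\
      (forall v v1, Z1 delta eps rho t u v -> Z1 delta eps rho t u v1 ->
         cohomologous delta rho t u v v1 -> equivOmega rho (F v) (F v1)),
      (forall s1 s2, Omega delta rho s1 -> Omega delta rho s2 ->
         equivOmega rho s1 s2 -> cohomologous delta rho t u (Finv s1) (Finv s2)) &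
      (forall v v1, Z1 delta eps rho t u v -> Z1 delta eps rho t u v1 ->
         (cohomologous delta rho t u v v1 <-> equivOmega rho (F v) (F v1)))]].
Proof.
move=> hH hcc hA hcl hBc ht0.
exact: (main hH hcc hA hcl hBc ht0).
Qed.
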